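(* $\mathfrak{L}(\mathrm{rtDVA}(1))\subsetneq\bigcup_{k}\mathfrak{L}(\mathrm{rtD}k\mathrm{CA})$.
   Context: $\mathfrak{L}(A)$ denotes the class of languages recognized by machines of type $A$. A real-time deterministic vector automaton of dimension $k$ ($\mathrm{rtDVA}(k)$) is a 6-tuple $(Q,\Sigma,\delta,q_0,Q_a,v)$ with finite state set $Q$, initial state $q_0$, accept states $Q_a$, initial row vector $v\in\mathbb{Q}^k$ (freely chosen), and $\delta:Q\times(\Sigma\cup\{\cent,\$\})\times\{=,\neq\}\to Q\times S$, $S$ the set of $k\times k$ rational matrices. The input $w$ is read as $\cent w\$$ left to right, one symbol per step; in state $q$ reading $\sigma$, with $\omega$ equal to ''$=$'' iff the first vector entry equals $1$, if $\delta(q,\sigma,\omega)=(q',M)$ the machine goes to $q'$ and multiplies its row vector on the right by $M$. Acceptance: after processing $\$$, the state is in $Q_a$ and the first vector entry equals $1$. A real-time deterministic $k$-counter automaton (rtD$k$CA) is a 5-tuple $(Q,\Sigma,\delta,q_0,Q_a)$ with $k$ integer counters initially $0$, reading $\cent w\$$ one symbol per step; $\delta(q,\sigma,\theta)=(q',c)$ with $\theta\in\{0,\pm\}^k$ the zero/nonzero status of each counter and $c\in\{-1,0,1\}^k$ the counter increments; acceptance iff in an accept state after scanning $\$$. The union ranges over all $k\ge 1$. *)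

(* Defs.v *)
From HB Require Import structures.
From mathcomp Require Import all_boot all_order all_algebra.
Set Implicit Arguments. Unset Strict Implicit. Unset Printing Implicit Defensive.
Import GRing.Theory Num.Theory.
Local Open Scope ring_scope.

Inductive esym (S : Type) := ESym of S | ECent | EDollar.
Arguments ECent {S}. Arguments EDollar {S}.

Definition tape (S : Type) (w : seq S) : seq (esym S) :=
  ECent :: map (@ESym S) w ++ [:: EDollar].

(* [rtDVA S n] is an rtDVA of dimension k = n.+1 (dimension is >= 1 so the
   "first entry" of the vector exists); rtDVA(1) is [rtDVA S 0]. *)
Record rtDVA (S : finType) (n : nat) := RtDVA {
  dva_Q : finType;
  (* the bool argument is omega: true iff the first vector entry equals 1 *)
  dva_delta : dva_Q -> esym S -> bool -> dva_Q * 'M[rat]_n.+1;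
  dva_q0 : dva_Q;
  dva_acc : {set dva_Q};
  dva_v : 'rV[rat]_n.+1 }.

Definition dva_step S n (M : rtDVA S n) (c : dva_Q M * 'rV[rat]_n.+1)
  (a : esym S) : dva_Q M * 'rV[rat]_n.+1 :=
  let: (q, v) := c in
  let: (q', A) := @dva_delta S n M q a (v 0 0 == 1) in (q', v *m A).

Definition dva_accepts S n (M : rtDVA S n) (w : seq S) : bool :=
  let: (q, v) := foldl (@dva_step S n M) (@dva_q0 S n M, @dva_v S n M) (tape w) in
  (q \in @dva_acc S n M) && (v 0 0 == 1).

Inductive incr := IncM1 | Inc0 | IncP1.
Definition incr_val (d : incr) : int :=
  match d with IncM1 => -1 | Inc0 => 0 | IncP1 => 1 end.

Record rtDCA (S : finType) (k : nat) := RtDCA {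
  dca_Q : finType;
  (* the status argument theta: theta i = true iff counter i is zero *)
  dca_delta : dca_Q -> esym S -> {ffun 'I_k -> bool} -> dca_Q * {ffun 'I_k -> incr};
  dca_q0 : dca_Q;
  dca_acc : {set dca_Q} }.

Definition dca_step S k (N : rtDCA S k) (c : dca_Q N * {ffun 'I_k -> int})
  (a : esym S) : dca_Q N * {ffun 'I_k -> int} :=
  let: (q, ctr) := c in
  let: (q', d) := @dca_delta S k N q a [ffun i => ctr i == 0] in
  (q', [ffun i => ctr i + incr_val (d i)]).

Definition dca_accepts S k (N : rtDCA S k) (w : seq S) : bool :=
  (foldl (@dca_step S k N) (@dca_q0 S k N, [ffun => 0]) (tape w)).1 \in @dca_acc S k N.

(* Main.v *)
Require Import Defs.
From mathcomp Require Import all_boot all_order all_algebra.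
From mathcomp Require Import zify ring lra.
Set Implicit Arguments. Unset Strict Implicit. Unset Printing Implicit Defensive.
Import Order.TTheory GRing.Theory Num.Theory.
Local Open Scope ring_scope.


Definition ee (p : nat) (x : rat) : int :=
  (logn p `|numq x|)%:Z - (logn p `|denq x|)%:Z.

Lemma abs_gt0 (z : int) : z != 0 -> (0 < `|z|)%N.
Proof. by rewrite absz_gt0. Qed.

Lemma ee_mul p x y : x != 0 -> y != 0 -> ee p (x * y) = ee p x + ee p y.
Proof.
move=> x0 y0.
have xy0 : x * y != 0 by rewrite mulf_neq0.
have E : numq (x * y) * (denq x * denq y) = numq x * numq y * denq (x * y).
  apply: (@intr_inj rat); rewrite !rmorphM /= !numqE; ring.
have E2 : (`|numq (x * y)| * (`|denq x| * `|denq y|) = `|numq x| * `|numq y| * `|denq (x * y)|)%N.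
  by rewrite -!abszM E.
have := congr1 (logn p) E2.
rewrite !lognM ?muln_gt0 ?abs_gt0 ?numq_eq0 ?denq_neq0 ?xy0 ?x0 ?y0 //.
rewrite /ee => H; lia.
Qed.

Lemma ee1 p : ee p 1 = 0.
Proof. by rewrite /ee logn1. Qed.

Lemma ee_eq1 x : x != 0 -> (forall p, ee p x = 0) -> 0 < x -> x = 1.
Proof.
move=> x0 H xp.
have hn : `|numq x|%N = `|denq x|%N.
  apply: eqn_from_log; rewrite ?abs_gt0 ?numq_eq0 ?denq_neq0 //.
  move=> p; have := H p; rewrite /ee; lia.
have nd : numq x = denq x.
  have n0 : 0 < numq x by rewrite numq_gt0.
  have d0 := denq_gt0 x. lia.
by rewrite -[x]divq_num_den nd divff // intr_eq0 denq_neq0.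
Qed.

Lemma logn_small p n : (0 < n)%N -> (n <= p)%N -> n != p -> logn p n = 0%N.
Proof.
move=> n0 np nq; apply/eqP; rewrite -leqn0 leqNgt logn_gt0 mem_primes.
apply/negP => /and3P [_ _ /dvdn_leq]; move/(_ n0) => pn. 
by move/eqP: nq; apply; apply/eqP; rewrite eqn_leq np pn.
Qed.

Lemma ee_bound N x : x != 0 -> (`|numq x| + `|denq x| < N)%N ->
  (forall p, (N <= p)%N -> ee p x = 0) /\ (forall p, - (N%:Z) < ee p x < N%:Z).
Proof.
move=> x0 hN.
have n0 : (0 < `|numq x|)%N by rewrite abs_gt0 // numq_eq0.
have d0 : (0 < `|denq x|)%N by rewrite abs_gt0 // denq_neq0.
split.
  move=> p hp; rewrite /ee !logn_small //; try lia.
move=> p; have l1 := ltn_logl p n0; have l2 := ltn_logl p d0.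
rewrite /ee; lia.
Qed.

Lemma window (N : nat) (c : int) (o : nat) (y : int) :
  (o <= 2 * N)%N -> - (N%:Z) <= y <= N%:Z ->
  ((2 * N).+1%:Z * c + o%:Z - N%:Z == y) = (c == 0) && (o%:Z - N%:Z == y).
Proof.
move=> ho hy.
case: (ltrgt0P c) => hc.
- have : (2 * N).+1%:Z <= (2 * N).+1%:Z * c.
    by rewrite ler_peMr // ; lia.
  move=> h /=; apply/negbTE/eqP; lia.
- have : (2 * N).+1%:Z * c <= - (2 * N).+1%:Z.
    have : c <= -1 by lia.
    move=> h1; rewrite -mulrN1 ler_pM2l //; lia.
  move=> h /=; apply/negbTE/eqP; lia.
- by rewrite hc mulr0 add0r.
Qed.

Definition upd (B : nat) (o : nat) (e : int) : nat * incr :=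
  let t := o%:Z + e in
  if t < 0 then (absz (t + B%:Z), IncM1)
  else if t < B%:Z then (absz t, Inc0) else (absz (t - B%:Z), IncP1).

Lemma upd_spec B o e : - (B%:Z) <= o%:Z + e < 2 * B%:Z ->
  ((upd B o e).1 < B)%N /\
  o%:Z + e = B%:Z * incr_val (upd B o e).2 + (upd B o e).1%:Z.
Proof.
rewrite /upd => h.
case: ifP => h1 /=; first by split; lia.
case: ifP => h2 /=; first by split; lia.
split; lia.
Qed.

Lemma sign_mul (x m : rat) : x != 0 -> m != 0 -> (0 < x * m) = ((x < 0) == (m < 0)).
Proof.
move=> x0 m0.
case: (ltrgt0P x) => hx; case: (ltrgt0P m) => hm /=;
 try (by move: x0 => /eqP; lra); try (by move: m0 => /eqP; lra).
- by apply/idP; rewrite mulr_gt0.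
- by apply/negbTE; rewrite -leNgt; apply: ltW; rewrite pmulr_rlt0.
- by apply/negbTE; rewrite -leNgt; apply: ltW; rewrite nmulr_rlt0.
- by apply/idP; rewrite nmulr_rgt0.
Qed.

Section Sim.
Variable N : nat.
Local Notation B := (2 * N).+1.

Definition test (z s : bool) (o : {ffun 'I_N -> 'I_B}) (th : {ffun 'I_N -> bool})
  (m : rat) : bool :=
  [&& ~~ z, m != 0, s == (m < 0) &
    [forall i, th i && ((o i)%:Z - N%:Z == - ee i m)]].

Definition good (m : rat) := m != 0 ->
  (forall p, (N <= p)%N -> ee p m = 0) /\ (forall p, - (N%:Z) <= ee p m <= N%:Z).

Lemma good1 : good 1.
Proof. by move=> _; split => p; rewrite ee1 //; lia. Qed.

Lemma test_ok (z s : bool) (o : {ffun 'I_N -> 'I_B}) (ctr : {ffun 'I_N -> int}) (x m : rat) :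
  z = (x == 0) ->
  (x != 0 -> [/\ s = (x < 0),
     (forall i : 'I_N, ee i x = B%:Z * ctr i + (o i)%:Z - N%:Z) &
     (forall p, (N <= p)%N -> ee p x = 0)]) ->
  good m ->
  test z s o [ffun i => ctr i == 0] m = (x * m == 1).
Proof.
move=> -> H gm; rewrite /test.
have [->|x0] := eqVneq x 0; first by rewrite mul0r.
have [->|m0] := eqVneq m 0; first by rewrite /= mulr0 eq_sym oner_eq0.
have [hs hi hp] := H x0; have [gp gi] := gm m0.
have y0 : x * m != 0 by rewrite mulf_neq0.
have -> : (x * m == 1) = (0 < x * m) && [forall i : 'I_N, ee i (x * m) == 0].
  apply/idP/idP.
    by move/eqP ->; rewrite ltr01 /=; apply/forallP => i; rewrite ee1.
  case/andP => pos /forallP fa; apply/eqP; apply: ee_eq1 => // p.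
  case: (ltnP p N) => hpN.
    by apply/eqP; exact: (fa (Ordinal hpN)).
  by rewrite ee_mul // hp // gp.
rewrite sign_mul // -hs /=; congr (_ && _).
apply: eq_forallb => i; rewrite ffunE ee_mul // hi.
have gi' := gi i.
rewrite -(@window N (ctr i) (o i) (- ee i m)); last by lia.
  by apply/eqP/eqP => h; lia.
by have := ltn_ord (o i); lia.
Qed.
End Sim.

Section Auto.
Variables (S : finType) (M : rtDVA S 0).
Local Notation Q := (dva_Q M).
Definition mult q a b : rat := (@dva_delta S 0 M q a b).2 0 0.
Definition v0 : rat := @dva_v S 0 M 0 0.
Definition sz (x : rat) : nat := (`|numq x| + `|denq x|)%N.
Definition bnd (q : Q) (b : bool) : nat :=
  maxn (sz (mult q ECent b)) (maxn (sz (mult q EDollar b))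
    (\max_(s : S) sz (mult q (ESym s) b))).
Definition Nb : nat := (maxn (sz v0) (\max_(q : Q) \max_(b : bool) bnd q b)).+1.
Local Notation B := (2 * Nb).+1.

Lemma sz_mult q a b : (sz (mult q a b) < Nb)%N.
Proof.
rewrite /Nb ltnS; apply: leq_trans (leq_maxr _ _).
apply: leq_trans (leq_bigmax q); apply: leq_trans (leq_bigmax b).
rewrite /bnd; case: a => [s||].
- apply: leq_trans (leq_maxr _ _); apply: leq_trans (leq_maxr _ _).
  exact: (leq_bigmax s).
- exact: leq_maxl.
- by apply: leq_trans (leq_maxr _ _); apply: leq_maxl.
Qed.

Lemma sz_v0 : (sz v0 < Nb)%N.
Proof. by rewrite /Nb ltnS leq_maxl. Qed.

Lemma good_sz x : (sz x < Nb)%N -> good Nb x.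
Proof.
move=> h x0; have [h1 h2] := ee_bound x0 h; split => // p.
by have := h2 p; lia.
Qed.

Definition DS := (Q * bool * bool * {ffun 'I_Nb -> 'I_B} * bool)%type.

Definition dN (st : DS) (a : Defs.esym S) (th : {ffun 'I_Nb -> bool}) :
  DS * {ffun 'I_Nb -> incr} :=
  let: (q, z, s, o, _) := st in
  let: (q', A) := @dva_delta S 0 M q a (test z s o th 1) in
  let m := A 0 0 in
  let fl := (q' \in @dva_acc S 0 M) && test z s o th m in
  if z || (m == 0) then ((q', true, s, o, fl), [ffun => Inc0])
  else ((q', false, s (+) (m < 0),
         [ffun i => inord (upd B (o i) (ee i m)).1], fl),
        [ffun i => (upd B (o i) (ee i m)).2]).

Definition init : DS :=
  (@dva_q0 S 0 M, v0 == 0, v0 < 0, [ffun i : 'I_Nb => inord (absz (ee i v0 + Nb%:Z))],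
   (@dva_q0 S 0 M \in @dva_acc S 0 M) && (v0 == 1)).

Definition NN : rtDCA S Nb := @RtDCA S Nb DS dN init [set x : DS | x.2].

Definition Inv (c : Q * 'rV[rat]_1) (d : DS * {ffun 'I_Nb -> int}) : Prop :=
  let: (q, v) := c in let: ((q', z, s, o, fl), ctr) := d in
  [/\ q' = q, z = (v 0 0 == 0), fl = (q \in @dva_acc S 0 M) && (v 0 0 == 1) &
    (v 0 0 != 0 -> [/\ s = (v 0 0 < 0),
      (forall i : 'I_Nb, ee i (v 0 0) = B%:Z * ctr i + (o i)%:Z - Nb%:Z) &
      (forall p, (Nb <= p)%N -> ee p (v 0 0) = 0)])].

Lemma mx11 (v : 'rV[rat]_1) (A : 'M[rat]_1) : (v *m A) 0 0 = v 0 0 * A 0 0.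
Proof. by rewrite mxE big_ord1. Qed.

Lemma Inv_step c d a : Inv c d -> Inv (dva_step c a) (dca_step (N := NN) d a).
Proof.
case: c => q v; case: d => [[[[[q' z] s] o] fl] ctr] /= [-> hz hfl hv].
set x := v 0 0 in hz hfl hv *.
have T1 := @test_ok Nb z s o ctr x 1 hz hv (good1 Nb).
rewrite mulr1 in T1. rewrite T1.
case E: (@dva_delta S 0 M q a (x == 1)) => [q2 A].
set m := A 0 0.
have gm : good Nb m.
  by apply: good_sz; rewrite /m -[A]/((q2, A).2) -E; exact: sz_mult.
have T2 := @test_ok Nb z s o ctr x m hz hv gm.
rewrite T2 /= mx11 -/x -/m.
case: ifP => hzm /=.
- have h0 : x * m = 0.
    by case/orP: hzm; [rewrite hz => /eqP ->; rewrite mul0r | move/eqP ->; rewrite mulr0].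
  by rewrite h0 eqxx; split => //; rewrite eqxx.
have x0 : x != 0 by move: hzm; rewrite hz; case: (x == 0).
have m0 : m != 0 by move: hzm; rewrite orbC; case: (m == 0).
have xm0 : x * m != 0 by rewrite mulf_neq0.
have [hs hi hp] := hv x0; have [gp gi] := gm m0.
split => //; first by rewrite (negbTE xm0).
move=> _; split.
- by rewrite mulr_lt0 x0 m0 hs.
- move=> i; rewrite ee_mul // hi !ffunE.
  have oi := ltn_ord (o i); have gii := gi i.
  have [hu1 hu2] := @upd_spec B (o i) (ee i m) ltac:(lia).
  rewrite inordK //.
  move: hu2; set d := incr_val _; set o' := (upd _ _ _).1 => hu2.
  have -> : o'%:Z = (o i)%:Z + ee i m - B%:Z * d by rewrite hu2; ring.
  ring.
- by move=> p hpN; rewrite ee_mul // hp // gp.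
Qed.

Lemma Inv_fold l c d : Inv c d ->
  Inv (foldl (@dva_step S 0 M) c l) (foldl (@dca_step S Nb NN) d l).
Proof. by elim: l c d => [|a l IH] c d //= H; apply: IH; apply: Inv_step. Qed.

Lemma Inv_init : Inv (@dva_q0 S 0 M, @dva_v S 0 M) (init, [ffun => 0]).
Proof.
rewrite /Inv /init -/v0; split => // h; split => //.
- move=> i; rewrite !ffunE mulr0 add0r.
  have [_ gi] := good_sz sz_v0 h; have gii := gi i.
  rewrite inordK; lia.
- by have [gp _] := good_sz sz_v0 h.
Qed.

Lemma NN_ok w : dva_accepts M w = dca_accepts NN w.
Proof.
rewrite /dva_accepts /dca_accepts.
have := Inv_fold (tape w) Inv_init.
case: (foldl _ _ _) => q v; case: (foldl _ _ _) => [[[[[q' z] s] o] fl] ctr].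
by case=> _ _ -> _ /=; rewrite inE.
Qed.
End Auto.

Fixpoint T (m : nat) : nat := if m is m'.+1 then (T m' + m'.+1)%N else 0%N.

Definition dr (b : bool) : 'I_2 := if b then ord_max else ord0.

Lemma dr_neg b (i : 'I_2) : (i == dr (~~ b)) = ~~ (i == dr b).
Proof. by case: b; case: i => [[|[|]]]. Qed.

Definition dT (st : bool * bool) (a : Defs.esym unit) (th : {ffun 'I_2 -> bool}) :
  (bool * bool) * {ffun 'I_2 -> incr} :=
  let ph := st.1 in
  if th (dr ph) then ((~~ ph, true), [ffun i => if i == dr ph then Inc0 else IncP1])
  else ((ph, false), [ffun i => if i == dr ph then IncM1 else IncP1]).

Definition NT : rtDCA unit 2 :=
  @RtDCA unit 2 (bool * bool)%type dT (false, false) [set x | x.2].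

Definition G (m j : nat) : (bool * bool) * {ffun 'I_2 -> int} :=
  ((odd m, (j == 0)%N && (0 < m)%N),
   [ffun i => if i == dr (odd m) then (m - j)%:Z else j%:Z]).

Definition F (c : (bool * bool) * {ffun 'I_2 -> int}) := dca_step (N := NT) c ECent.

Lemma F_any c a : dca_step (N := NT) c a = F c.
Proof. by case: c. Qed.

Lemma stepA m j : (j < m)%N -> F (G m j) = G m j.+1.
Proof.
move=> hj; rewrite /F /G /dca_step /= /dT /= !ffunE eqxx.
have -> : ((m - j)%:Z == 0) = false by apply/eqP; lia.
congr (_, _); apply/ffunP => i; rewrite !ffunE.
case: (i == dr (odd m)) => /=; lia.
Qed.

Lemma stepB m : F (G m m) = G m.+1 0.
Proof.
rewrite /F /G /dca_step /= /dT /= !ffunE eqxx.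
have -> : ((m - m)%:Z == 0) = true by apply/eqP; lia.
congr (_, _); apply/ffunP => i; rewrite !ffunE dr_neg.
case: (i == dr (odd m)) => /=; lia.
Qed.

Lemma run0 m : iter (T m) F (false, false, [ffun => 0]) = G m 0.
Proof.
elim: m => [|m IH].
  by rewrite /G /=; congr (_, _); apply/ffunP => i; rewrite !ffunE; case: ifP.
have E : forall j, (j <= m)%N -> iter (T m + j) F (false, false, [ffun => 0]) = G m j.
  elim=> [|j IHj] hj; first by rewrite addn0.
  by rewrite addnS iterS IHj ?stepA //; lia.
by rewrite /= addnS iterS E // stepB.
Qed.

Lemma run m j : (j <= m)%N -> iter (T m + j) F (false, false, [ffun => 0]) = G m j.
Proof.
move=> hj; elim: j hj => [|j IHj] hj; first by rewrite addn0 run0.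
by rewrite addnS iterS IHj ?stepA //; lia.
Qed.

Lemma foldl_ign (X A : Type) (f : X -> A -> X) (g : X -> X) :
  (forall c a, f c a = g c) -> forall l z, foldl f z l = iter (size l) g z.
Proof.
move=> h; elim=> [|a l IH] z //=; by rewrite IH h -iterSr.
Qed.

Lemma foldl_nseq (X A : Type) (f : X -> A -> X) z a n :
  foldl f z (nseq n a) = iter n (fun c => f c a) z.
Proof. by elim: n z => [|n IH] z //=; rewrite IH -iterSr. Qed.

Lemma NT_acc n : dca_accepts NT (nseq n tt) =
  (iter n.+2 F (false, false, [ffun => 0])).1.2.
Proof.
rewrite /dca_accepts (foldl_ign (@F_any)) /tape /= size_cat size_map size_nseq addn1.
by rewrite inE.
Qed.

Lemma T_ge m : (m <= T m)%N.
Proof. by elim: m => [|m IH] //=; lia. Qed.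

Lemma flagG m j : (j <= m)%N -> (iter (T m + j) F (false, false, [ffun => 0])).1.2 = (j == 0)%N && (0 < m)%N.
Proof. by move=> h; rewrite run. Qed.

Section Dva.
Variable M : rtDVA unit 0.
Definition c1 := dva_step (@dva_q0 _ _ M, @dva_v _ _ M) ECent.
Definition Gd c := @dva_step _ _ M c (ESym tt).
Definition cc n := iter n Gd c1.
Definition fin (c : dva_Q M * 'rV[rat]_1) : bool :=
  let: (q, v) := dva_step c EDollar in (q \in @dva_acc _ _ M) && (v 0 0 == 1).

Lemma dva_acc_n n : dva_accepts M (nseq n tt) = fin (cc n).
Proof.
rewrite /dva_accepts /tape /= map_nseq foldl_cat foldl_nseq /=.
by rewrite /fin /cc /c1 /Gd; case: (dva_step _ _).
Qed.

Lemma fin_inj c c' : fin c -> fin c' -> c.1 = c'.1 ->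
  (c.2 0 0 == 1) = (c'.2 0 0 == 1) -> c = c'.
Proof.
case: c => q v; case: c' => q' v' /= + + eq1 eq2; subst q'.
rewrite /fin /dva_step -eq2.
case: (dva_delta _ _ _) => q2 A /andP [_ /eqP h1] /andP [_ /eqP h2].
move: h1 h2; rewrite !mxE !big_ord1 => h1 h2.
have A0 : A 0 0 != 0 by apply/eqP => A0; move: h1; rewrite A0 mulr0 => /eqP; rewrite eq_sym oner_eq0.
have : v 0 0 = v' 0 0 by apply: (mulIf A0); rewrite h1 h2.
move=> e; congr (_, _); apply/matrixP => i j; by rewrite !ord1.
Qed.
End Dva.

From Stdlib Require Import Classical.

Lemma part2 (M : rtDVA unit 0) : exists w, dva_accepts M w <> dca_accepts NT w.
Proof.
apply: NNPP => Hn.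
have H : forall n, fin (cc M n) = (iter n.+2 F (false, false, [ffun => 0])).1.2.
  move=> n; rewrite -dva_acc_n -NT_acc; apply: NNPP => hw; apply: Hn.
  by exists (nseq n tt).
have core : forall a b, (2 <= a)%N -> (a < b)%N ->
    (cc M (T a - 2)).1 = (cc M (T b - 2)).1 ->
    ((cc M (T a - 2)).2 0 0 == 1) = ((cc M (T b - 2)).2 0 0 == 1) -> False.
  move=> a b ha hab e1 e2.
  have Ta := T_ge a; have Tb := T_ge b.
  have fa : fin (cc M (T a - 2)).
    rewrite H; have -> : (T a - 2).+2 = (T a + 0)%N by lia.
    rewrite flagG //=; lia.
  have fb : fin (cc M (T b - 2)).
    rewrite H; have -> : (T b - 2).+2 = (T b + 0)%N by lia.
    rewrite flagG //=; lia.
  have e := fin_inj fa fb e1 e2.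
  have : fin (cc M (a.+1 + (T a - 2))) = fin (cc M (a.+1 + (T b - 2))).
    by rewrite /cc !iterD -!/(cc M _) e.
  rewrite !H.
  have -> : (a.+1 + (T a - 2)).+2 = (T a.+1 + 0)%N by rewrite /=; lia.
  have -> : (a.+1 + (T b - 2)).+2 = (T b + a.+1)%N by lia.
  rewrite !flagG //=; lia.
pose K := #|{: dva_Q M * bool}|.+1.
pose f (i : 'I_K) := ((cc M (T (i + 2)%N - 2)%N).1, (cc M (T (i + 2)%N - 2)%N).2 0 0 == 1).
have ninj : ~ injective f.
  move=> /leq_card; rewrite card_ord /K !card_prod; lia.
have [i Hi] := not_all_ex_not _ _ ninj.
have [j Hj] := not_all_ex_not _ _ Hi.
have [fij nij] := imply_to_and _ _ Hj.
case: (ltngtP i j) => hij.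
- by apply: (core (i + 2)%N (j + 2)%N); [lia | lia | exact: (congr1 fst fij) | exact: (congr1 snd fij)].
- by apply: (core (j + 2)%N (i + 2)%N); [lia | lia | exact: (esym (congr1 fst fij)) | exact: (esym (congr1 snd fij))].
- by apply: nij; apply: val_inj.
Qed.

Theorem theorem5 :
  (forall (S : finType) (M : rtDVA S 0),
      exists k : nat, (0 < k)%N /\
        exists N : rtDCA S k, forall w : seq S, dva_accepts M w = dca_accepts N w)
  /\
  (exists (S : finType) (k : nat), (0 < k)%N /\
      exists N : rtDCA S k,
        forall M : rtDVA S 0, exists w : seq S, dva_accepts M w <> dca_accepts N w).
Proof.
split.
- move=> S M; exists (@Nb S M); split; first by [].
  exists (@NN S M); exact: NN_ok.
- exists unit, 2%N; split => //; exists NT; exact: part2.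
Qed.
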